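(* Let $\mathbf{B}_1=\{S_1,C_3,S_5,S_7,\dots\}$ and $\mathbf{B}_2=\{S_1,S_3,S_5,S_7,\dots\}$. For each $n\ge1$, both $\mathcal{Y}(\mathbf{B}_1)$ and $\mathcal{Y}(\mathbf{B}_2)$ are bases of $\Gamma^n$.
   Context: For a finite simple graph $G$, $X_G$ is its chromatic symmetric function (the sum over proper colorings $\kappa$ of $\prod_v x_{\kappa(v)}$), $\omega$ is the involution on symmetric functions with $\omega(p_r)=(-1)^{r-1}p_r$, and $Y_G=(X_G+\omega(X_G))/2$. $\Gamma=\mathbb{Q}[p_1,p_3,\dots]$ and $\Gamma^n$ is its homogeneous degree-$n$ component. $OP(n)$ is the set of partitions of $n$ into odd parts. For a set $\mathbf{B}=\{G_1,G_3,G_5,\dots\}$ of graphs with $G_k$ having $k$ vertices, $\mathcal{Y}(\mathbf{B})=\{\prod_i Y_{G_{\lambda_i}} : \lambda=(\lambda_1,\lambda_2,\dots)\in OP(n)\}$. $C_3$ is the 3-cycle and $S_n$ the star tree on $n$ vertices (one internal vertex, $n-1$ leaves). *)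

(* Defs.v *)
From HB Require Import structures.
From mathcomp Require Import all_boot all_order all_algebra.
From Stdlib Require Import ClassicalEpsilon.
Set Implicit Arguments. Unset Strict Implicit. Unset Printing Implicit Defensive.
Import Order.TTheory GRing.Theory Num.Theory.
Local Open Scope ring_scope.

(* Symmetric functions of degree k are represented faithfully by their
   restriction to N >= k variables, viewed as polynomial functions
   ('I_N -> rat) -> rat (rat is infinite, so polynomial functions = polynomials). *)
Definition fn N := ('I_N -> rat) -> rat.

(* A simple graph on vertex set 'I_k is a symmetric irreflexive e : rel 'I_k. *)
Definition proper_col k N (e : rel 'I_k) (c : {ffun 'I_k -> 'I_N}) : bool :=
  [forall u, forall v, e u v ==> (c u != c v)].

Definition Xchrom k N (e : rel 'I_k) : fn N := fun x =>
  \sum_(c : {ffun 'I_k -> 'I_N} | proper_col e c) \prod_(v : 'I_k) x (c v).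

Definition psum N (r : nat) : fn N := fun x => \sum_(i < N) x i ^+ r.

(* Partitions of k in multiplicity form: m i = multiplicity of the part i+1. *)
Definition mpart k := {ffun 'I_k -> 'I_k.+1}.
Definition is_partn k (m : mpart k) : bool := (\sum_(i < k) i.+1 * m i)%N == k.
Definition lenp k (m : mpart k) : nat := (\sum_(i < k) m i)%N.
(* all parts odd: part i+1 is even iff i is odd *)
Definition oddp k (m : mpart k) : bool := [forall i : 'I_k, odd i ==> (m i == 0%N :> nat)].

Definition pmp k N (m : mpart k) : fn N := fun x =>
  \prod_(i < k) @psum N i.+1 x ^+ m i.

Definition in_pspan k N (f : fn N) (c : {ffun mpart k -> rat}) : Prop :=
  forall x, f x = \sum_(m | is_partn m) c m * @pmp k N m x.

(* the power-sum coefficients of f (unique when N >= k and f in the span) *)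
Definition pcoef k N (f : fn N) : {ffun mpart k -> rat} :=
  epsilon (inhabits [ffun => 0]) (@in_pspan k N f).

Definition omega k N (f : fn N) : fn N := fun x =>
  \sum_(m | is_partn m) (-1) ^+ (k - lenp m) * @pcoef k N f m * @pmp k N m x.

Definition Ygr k N (e : rel 'I_k) : fn N := fun x =>
  (@Xchrom k N e x + @omega k N (@Xchrom k N e) x) / 2%:R.

Definition star k : rel 'I_k := fun u v => (u != v) && ((val u == 0%N) || (val v == 0%N)).
Definition complete k : rel 'I_k := fun u v => u != v.

(* B1 = {S1, C3, S5, S7, ...}, B2 = {S1, S3, S5, ...}; only odd k are used *)
Definition B1 (k : nat) : rel 'I_k := if k == 3%N then @complete k else @star k.
Definition B2 (k : nat) : rel 'I_k := @star k.

Definition Yprod n (B : forall k, rel 'I_k) (m : mpart n) : fn n := fun x =>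
  \prod_(i < n) @Ygr i.+1 n (B i.+1) x ^+ m i.

Definition inGamma n (f : fn n) : Prop :=
  exists c : {ffun mpart n -> rat},
    forall x, f x = \sum_(m | is_partn m && oddp m) c m * @pmp n n m x.

Definition is_basis_Gamma n (F : mpart n -> fn n) : Prop :=
  [/\ forall m, is_partn m -> oddp m -> inGamma (F m),
      forall a : {ffun mpart n -> rat},
        (forall x, \sum_(m | is_partn m && oddp m) a m * F m x = 0) ->
        forall m, is_partn m -> oddp m -> a m = 0
    & forall f, inGamma f ->
        exists a : {ffun mpart n -> rat},
          forall x, f x = \sum_(m | is_partn m && oddp m) a m * F m x].

(* Main.v *)
Require Import Defs.
From HB Require Import structures.
From mathcomp Require Import all_boot all_order all_algebra.
From mathcomp Require Import ring lra zify.
From Stdlib Require Import ClassicalEpsilon.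
Set Implicit Arguments. Unset Strict Implicit. Unset Printing Implicit Defensive.
Import Order.TTheory GRing.Theory Num.Theory.
Local Open Scope ring_scope.


Lemma poly_fun0 (p : {poly rat}) : (forall t, p.[t] = 0) -> p = 0.
Proof.
move=> H; apply/eqP; apply/negPn/negP => nz.
have A : all (root p) [seq i%:R | i <- iota 0 (size p)].
  by apply/allP => z _; rewrite rootE H.
have U : uniq [seq (i%:R : rat) | i <- iota 0 (size p)].
  by rewrite map_inj_uniq ?iota_uniq // => a b /eqP; rewrite eqr_nat => /eqP.
by have := max_poly_roots nz A U; rewrite size_map size_iota ltnn.
Qed.

Definition ext N (t : rat) (y : 'I_N -> rat) : 'I_N.+1 -> rat :=
  fun i => if unlift ord0 i is Some j then y j else t.

Lemma psum_ext N r t y : @psum N.+1 r (ext t y) = t ^+ r + @psum N r y.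
Proof.
rewrite /psum big_ord_recl /ext unlift_none; congr (_ + _).
by apply: eq_bigr => i _; rewrite liftK.
Qed.

Definition form (j : nat) (p : {poly rat}) (a b : rat) :=
  exists r, p = a%:P + b *: 'X^(j.+1) + 'X^(j.+2) * r.

Lemma form_coef j p a b : form j p a b -> p`_j.+1 = b.
Proof.
case=> r ->; rewrite !coefD coefC coefZ coefXn coefXnM eqxx mulr1 ltnSn.
by rewrite add0r addr0.
Qed.

Lemma form_eq j p a b a' b' : form j p a b -> a = a' -> b = b' -> form j p a' b'.
Proof. by move=> ? <- <-. Qed.

Lemma form_mul j p q a b a' b' : form j p a b -> form j q a' b' ->
  form j (p * q) (a * a') (a * b' + b * a').
Proof.
case=> r -> [r' ->].
exists (r * (a'%:P + b' *: 'X^(j.+1) + 'X^(j.+2) * r') + a%:P * r'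
        + b%:P * 'X^j * 'X * r' + (b * b')%:P * 'X^j).
rewrite -!mul_polyC !polyCM polyCD polyCM !exprS.
ring.
Qed.

Lemma form_lin j c : form j ('X^(j.+1) + c%:P) c 1.
Proof. by exists 0; rewrite mulr0 addr0 scale1r addrC. Qed.

Lemma form_one j : form j 1 1 0.
Proof. by exists 0; rewrite mulr0 addr0 scale0r addr0. Qed.

Lemma form_pow j c e : form j (('X^(j.+1) + c%:P) ^+ e) (c ^+ e) (e%:R * c ^+ e.-1).
Proof.
elim: e => [|e IH]; first by rewrite expr0 mul0r; apply: form_one.
rewrite exprSr; apply: form_eq (form_mul IH (form_lin j c)) _ _.
  by rewrite exprSr.
case: e {IH} => [|e]; first by rewrite mul0r mulr1 addr0.
rewrite /= mulr1 exprSr; rewrite [in RHS]mulrS; ring.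
Qed.

Lemma form_pow0 j p c e : form j p c 0 -> form j (p ^+ e) (c ^+ e) 0.
Proof.
move=> F; elim: e => [|e IH]; first by rewrite !expr0; apply: form_one.
rewrite !exprSr; apply: form_eq (form_mul IH F) _ _ => //.
by rewrite mulr0 mul0r addr0.
Qed.

Lemma form_hi j k c : (j < k)%N -> form j ('X^(k.+1) + c%:P) c 0.
Proof.
move=> ltjk; exists ('X^(k.+1 - j.+2)).
by rewrite scale0r addr0 -exprD subnKC // addrC.
Qed.

Lemma coef_prod K (j : 'I_K) (c : 'I_K -> rat) (e : 'I_K -> nat) :
  (forall k : 'I_K, (k < j)%N -> e k = 0%N) ->
  (\prod_(k < K) ('X^(k.+1) + (c k)%:P) ^+ e k)`_j.+1 =
  (e j)%:R * \prod_(k < K) c k ^+ (e k - (k == j))%N.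
Proof.
move=> low.
rewrite (bigD1 j) //= [in RHS](bigD1 j) //= eqxx subn1.
have F2 : form j (\prod_(k < K | k != j) ('X^(k.+1) + (c k)%:P) ^+ e k)
                 (\prod_(k < K | k != j) c k ^+ e k) 0.
  apply: (big_ind2 (fun p a => form j p a 0)); first exact: form_one.
    move=> p1 a1 p2 a2 F G; apply: form_eq (form_mul F G) _ _ => //.
    by rewrite mulr0 mul0r addr0.
  move=> k nkj; case: (ltngtP k j) => [lt|gt|/val_inj eq]; last by rewrite eq eqxx in nkj.
    by rewrite low // !expr0; apply: form_one.
  by apply: form_pow0; apply: form_hi.
rewrite (form_coef (form_mul (form_pow j (c j) (e j)) F2)) mulr0 add0r.
rewrite -mulrA; congr (_ * (_ * _)); apply: eq_bigr => k nkj.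
by rewrite (negbTE nkj) subn0.
Qed.

Definition pmu N K (u : 'I_K -> nat) : fn N :=
  fun x => \prod_(k < K) @psum N k.+1 x ^+ u k.
Arguments pmu N {K} u _.

Lemma indep_base N K (I : finType) (P : pred I) (mu : I -> 'I_K -> nat) (a : I -> rat) :
  {in P &, forall i i', mu i =1 mu i' -> i = i'} ->
  (forall i, P i -> a i != 0 -> forall k, mu i k = 0%N) ->
  (forall x, \sum_(i | P i) a i * pmu N (mu i) x = 0) ->
  forall i, P i -> a i = 0.
Proof.
move=> inj z0 H i Pi; apply/eqP/negP => /negP nz.
have := H (fun _ => 0); rewrite (bigD1 i) //= big1.
  rewrite addr0 /pmu big1 ?mulr1; first by move/eqP; rewrite (negbTE nz).
  by move=> k _; rewrite z0.
move=> i' /andP[Pi' ni']; have [->|nz'] := eqVneq (a i') 0; first by rewrite mul0r.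
have e : i' = i by apply: inj => // k; rewrite !z0.
by rewrite e eqxx in ni'.
Qed.

Lemma term_le K (u : 'I_K -> nat) (k : 'I_K) : (k.+1 * u k <= \sum_(k0 < K) k0.+1 * u k0)%N.
Proof. by rewrite (bigD1 k) //= leq_addr. Qed.

Lemma pm_indep N K (I : finType) (P : pred I) (mu : I -> 'I_K -> nat) (a : I -> rat) :
  {in P &, forall i i', mu i =1 mu i' -> i = i'} ->
  (forall i, P i -> \sum_(k < K) k.+1 * mu i k <= N)%N ->
  (forall x, \sum_(i | P i) a i * pmu N (mu i) x = 0) ->
  forall i, P i -> a i = 0.
Proof.
elim: N I P mu a => [|N IH] I P mu a inj wt H.
  apply: indep_base inj _ H => i Pi _ k.
  have := leq_trans (term_le (mu i) k) (wt i Pi); rewrite leqn0 muln_eq0 /=.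
  by move/eqP.
suff C : forall j, (j <= K)%N -> forall i, P i -> a i != 0 ->
    forall k : 'I_K, (k < j)%N -> mu i k = 0%N.
  by apply: indep_base inj _ H => i Pi nz k; apply: (C K) => //.
elim=> [|j IHj] leK i Pi nz k ltk; first by [].
have ltj : (j < K)%N by [].
rewrite ltnS leq_eqVlt in ltk; case/orP: ltk => [/eqP ekj|]; last first.
  by move=> lt; apply: IHj => //; apply: ltnW.
set jj := Ordinal ltj.
have ekj' : k = jj by apply: val_inj.
rewrite ekj'.
apply/eqP; apply/negP => /negP; rewrite -lt0n => pos.
pose low i := [forall k : 'I_K, (k < j)%N ==> (mu i k == 0%N)].
pose P' i := [&& P i, low i & (0 < mu i jj)%N].
pose mu' i (k : 'I_K) := (mu i k - (k == jj))%N.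
pose a' i := a i * (mu i jj)%:R.
have lowE : forall i0, P i0 -> a i0 != 0 -> low i0.
  move=> i0 Pi0 nz0; apply/forallP => k0; apply/implyP => lt0.
  by apply/eqP; apply: IHj => //; apply: ltnW.
have inj' : {in P' &, forall i i', mu' i =1 mu' i' -> i = i'}.
  move=> i1 i2 /and3P[P1 _ p1] /and3P[P2 _ p2] E; apply: inj => // k0.
  have := E k0; rewrite /mu'; case: (k0 =P jj) => [->|_] /=; last by rewrite !subn0.
  by lia.
have wt' : forall i, P' i -> (\sum_(k < K) k.+1 * mu' i k <= N)%N.
  move=> i1 /and3P[P1 _ p1]; have := wt i1 P1.
  rewrite (bigD1 jj) //= [X in (X <= N)%N](bigD1 jj) //= /mu' eqxx.
  rewrite [X in (_ + X <= N)%N](eq_bigr (fun k : 'I_K => k.+1 * mu i1 k)%N); last first.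
    by move=> k0 nk; rewrite (negbTE nk) subn0.
  rewrite /=; move: p1; set s := (\sum_(i0 < K | i0 != jj) _)%N.
  move=> p1; rewrite mulnBr muln1 => h.
  have : (j.+1 <= j.+1 * mu i1 jj)%N by rewrite leq_pmulr.
  lia.
have H' : forall y, \sum_(i | P' i) a' i * pmu N (mu' i) y = 0.
  move=> y.
  pose Q i := \prod_(k < K) ('X^(k.+1) + (@psum N k.+1 y)%:P) ^+ mu i k.
  pose S := \sum_(i | P i) a i *: Q i.
  have S0 : S = 0.
    apply: poly_fun0 => t; rewrite /S horner_sum -[RHS](H (ext t y)).
    apply: eq_bigr => i1 _; rewrite hornerZ /Q horner_prod /pmu; congr (_ * _).
    apply: eq_bigr => k0 _; rewrite horner_exp hornerD hornerXn hornerC.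
    by rewrite psum_ext.
  have E := congr1 (fun p : {poly rat} => p`_j.+1) S0.
  rewrite /= coef0 /S coef_sum in E.
  rewrite -[RHS]E /P' [LHS]big_mkcondr /=; symmetry; apply: eq_bigr => i1 P1.
  rewrite coefZ.
  have [E1|nz1] := eqVneq (a i1) 0.
    by rewrite /a' E1 !mul0r; case: ifP.
  have l1 := lowE i1 P1 nz1; rewrite l1 /=.
  rewrite /Q (coef_prod (j := jj)); last first.
    by move=> k0 lt0; apply/eqP; move/forallP: l1 => /(_ k0); rewrite lt0.
  case: posnP => [->|_]; first by rewrite mul0r mulr0.
  by rewrite /a' /pmu /mu' mulrA.
have := IH I P' mu' a' inj' wt' H' i; rewrite /P' Pi pos /= lowE //.
move=> /(_ isT) /eqP; rewrite /a' mulf_eq0 (negbTE nz) /= pnatr_eq0 => /eqP.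
by move=> e; rewrite e in pos.
Qed.


Lemma pspan_uniq k N (hk : (k <= N)%N) (f : fn N) (c c' : {ffun mpart k -> rat}) :
  @in_pspan k N f c -> @in_pspan k N f c' -> forall m, is_partn m -> c m = c' m.
Proof.
move=> H H' m Pm; apply/eqP; rewrite -subr_eq0; apply/eqP; move: m Pm.
apply: (@pm_indep N k _ (@is_partn k) (fun m i => nat_of_ord (m i))
          (fun m => c m - c' m)).
- by move=> m1 m2 _ _ E; apply/ffunP => i; apply/val_inj; apply: E.
- by move=> m /eqP ->.
- move=> x; rewrite (eq_bigr (fun m => c m * @pmp k N m x - c' m * @pmp k N m x)).
    by rewrite sumrB -H -H' subrr.
  by move=> m _; rewrite mulrBl.
Qed.

Definition coefL k (L : seq (rat * mpart k)) : {ffun mpart k -> rat} :=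
  [ffun m => \sum_(p <- L) (p.2 == m)%:R * p.1].

Lemma sum_pick k (m0 : mpart k) (G : mpart k -> rat) : is_partn m0 ->
  \sum_(m | is_partn m) (m0 == m)%:R * G m = G m0.
Proof.
move=> P0; rewrite (bigD1 m0) //= eqxx mul1r big1 ?addr0 //.
by move=> m /andP[_ nm]; rewrite eq_sym (negbTE nm) mul0r.
Qed.

Lemma in_pspan_list k N (L : seq (rat * mpart k)) (f : fn N) :
  (forall p, p \in L -> is_partn p.2) ->
  (forall x, f x = \sum_(p <- L) p.1 * @pmp k N p.2 x) ->
  @in_pspan k N f (coefL L).
Proof.
move=> PL H x; rewrite H.
symmetry; rewrite /coefL; under eq_bigr => m _ do rewrite ffunE mulr_suml.
rewrite exchange_big /=; apply: eq_big_seq => p pL.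
rewrite -(sum_pick (fun m => p.1 * @pmp k N m x) (PL p pL)).
by apply: eq_bigr => m _; rewrite mulrA.
Qed.

Lemma omega_list k N (hk : (k <= N)%N) (L : seq (rat * mpart k)) (f : fn N) :
  (forall p, p \in L -> is_partn p.2) ->
  (forall x, f x = \sum_(p <- L) p.1 * @pmp k N p.2 x) ->
  forall x, @omega k N f x = \sum_(p <- L) (-1) ^+ (k - lenp p.2) * p.1 * @pmp k N p.2 x.
Proof.
move=> PL H x.
have S : @in_pspan k N f (coefL L) by apply: in_pspan_list.
have S' : @in_pspan k N f (@pcoef k N f) by apply: epsilon_spec; exists (coefL L).
rewrite /omega.
rewrite (eq_bigr (fun m => (-1) ^+ (k - lenp m) * coefL L m * @pmp k N m x)); last first.
  by move=> m Pm; rewrite (pspan_uniq hk S' S Pm).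
rewrite /coefL; under eq_bigr => m _ do rewrite ffunE mulr_sumr mulr_suml.
rewrite exchange_big /=; apply: eq_big_seq => p pL.
rewrite -(sum_pick (fun m => (-1) ^+ (k - lenp m) * p.1 * @pmp k N m x) (PL p pL)).
by apply: eq_bigr => m _; rewrite mulrCA !mulrA.
Qed.

Lemma Ygr_list k N (hk : (k <= N)%N) (L : seq (rat * mpart k)) (e : rel 'I_k) :
  (forall p, p \in L -> is_partn p.2) ->
  (forall x, @Xchrom k N e x = \sum_(p <- L) p.1 * @pmp k N p.2 x) ->
  forall x, @Ygr k N e x =
    \sum_(p <- L) ((1 + (-1) ^+ (k - lenp p.2)) / 2%:R) * p.1 * @pmp k N p.2 x.
Proof.
move=> PL H x; rewrite /Ygr (omega_list hk PL H) H -big_split /= mulr_suml.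
by apply: eq_bigr => p _; ring.
Qed.


Lemma psum_bigD1 N x (a : 'I_N) :
  @psum N 1 x = x a + \sum_(j | j != a) x j.
Proof. by rewrite /psum (bigD1 a) //= expr1; under eq_bigr do rewrite expr1. Qed.

Lemma X_star k N x : @Xchrom k.+1 N (@star k.+1) x =
  \sum_(a < N) x a * (@psum N 1 x - x a) ^+ k.
Proof.
rewrite /Xchrom (partition_big (fun c : {ffun 'I_k.+1 -> 'I_N} => c ord0) (predT : pred 'I_N)) //=.
apply: eq_bigr => a _.
pose Q (v : 'I_k.+1) : pred 'I_N := fun j => if v == ord0 then j == a else j != a.
transitivity (\sum_(c in family Q) \prod_v x (c v)).
  apply: eq_bigl => c; apply/andP/familyP.
    case=> /forallP pr /eqP ca v; rewrite unfold_in /Q.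
    case: eqP => [->|/eqP nv]; first by rewrite ca.
    have := pr ord0; move/forallP/(_ v)/implyP; rewrite /star /=.
    by rewrite andbT eq_sym nv ca eq_sym => /(_ isT).
  move=> F; split; last first.
    by have := F ord0; rewrite unfold_in /Q.
  apply/forallP => u; apply/forallP => v; apply/implyP => /andP[nuv uv0].
  have Fu := F u; have Fv := F v; rewrite !unfold_in /Q in Fu Fv.
  case/orP: uv0 => /eqP e0.
    have eu : u = ord0 by apply: val_inj.
    have nv : v != ord0 by rewrite -eu eq_sym.
    rewrite eu eqxx in Fu; rewrite (negbTE nv) in Fv.
    by rewrite eu (eqP Fu) eq_sym.
  have ev : v = ord0 by apply: val_inj.
  have nu : u != ord0 by rewrite -ev.
  rewrite ev eqxx in Fv; rewrite (negbTE nu) in Fu.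
  by rewrite ev (eqP Fv).
rewrite -(bigA_distr_big_dep _ (fun _ j => x j)) big_ord_recl /= /Q eqxx big_pred1_eq.
congr (_ * _).
rewrite (eq_bigr (fun _ => \sum_(j | j != a) x j)); last first.
  by move=> i _; apply: eq_bigl => j; rewrite /= -(inj_eq val_inj) /=.
rewrite prodr_const card_ord (psum_bigD1 x a); congr (_ ^+ _); ring.
Qed.

Lemma X_star2 k N x : @Xchrom k.+1 N (@star k.+1) x =
  \sum_(j < k.+1) ((-1) ^+ j * ('C(k, j))%:R) *
        (@psum N 1 x ^+ (k - j) * @psum N j.+1 x).
Proof.
rewrite X_star; set p1 := @psum N 1 x.
under eq_bigr => a _ do rewrite exprDn mulr_sumr.
rewrite exchange_big /=; apply: eq_bigr => j _.
rewrite [@psum N j.+1 x]/psum !mulr_sumr; apply: eq_bigr => a _.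
rewrite -[- x a]mulN1r exprMn -mulr_natr exprS; ring.
Qed.

Lemma sum_cub N (x : 'I_N -> rat) (al be ga : rat) :
  \sum_(a < N) (al * x a + be * x a ^+ 2 + ga * x a ^+ 3) =
  al * @psum N 1 x + be * @psum N 2 x + ga * @psum N 3 x.
Proof.
rewrite !big_split /= -!mulr_sumr /psum; congr (_ * _ + _ + _).
Qed.

Lemma sum_skip N (a : 'I_N) (G : 'I_N -> rat) :
  \sum_(b < N) (if a == b then 0 else G b) = \sum_(b < N) G b - G a.
Proof.
rewrite [in RHS](bigD1 a) //= (bigD1 a) //= eqxx add0r addrAC subrr add0r.
by apply: eq_bigr => b nb; rewrite eq_sym (negbTE nb).
Qed.

Definition i0 : 'I_3 := ord0.
Definition i1 : 'I_3 := lift ord0 ord0.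
Definition i2 : 'I_3 := lift ord0 (lift ord0 ord0).

Lemma I3 (v : 'I_3) : [\/ v = i0, v = i1 | v = i2].
Proof.
case: v => [[|[|[|//]]] h]; [apply: Or31|apply: Or32|apply: Or33]; exact: val_inj.
Qed.

Lemma X_C3 N x : @Xchrom 3 N (@complete 3) x =
  @psum N 1 x ^+ 3 - 3%:R * (@psum N 1 x * @psum N 2 x) + 2%:R * @psum N 3 x.
Proof.
set p1 := @psum N 1 x.
rewrite /Xchrom (partition_big (fun c : {ffun 'I_3 -> 'I_N} => c i0) (predT : pred 'I_N)) //=.
transitivity (\sum_(a < N) \sum_(b < N)
    (if a == b then 0 else x a * (x b * (p1 - x a - x b)))).
  apply: eq_bigr => a _.
  rewrite (partition_big (fun c : {ffun 'I_3 -> 'I_N} => c i1) (predT : pred 'I_N)) //=.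
  apply: eq_bigr => b _.
  case: eqP => [<-|/eqP nab].
    rewrite big_pred0 // => c; apply/negP => /andP[/andP[pr /eqP e0] /eqP e1].
    move/forallP: pr => /(_ i0)/forallP/(_ i1); rewrite e0 e1 eqxx.
    by rewrite /complete.
  pose Q (v : 'I_3) : pred 'I_N := fun j =>
    if val v == 0%N then j == a else if val v == 1%N then j == b
    else (j != a) && (j != b).
  transitivity (\sum_(c in family Q) \prod_v x (c v)).
    apply: eq_bigl => c; apply/andP/familyP.
      case=> /andP[pr /eqP e0] /eqP e1 v; rewrite unfold_in /Q.
      case: (I3 v) => ->; rewrite /= ?e0 ?e1 ?eqxx //.
      move/forallP: pr => /(_ i2)/forallP pr2.
      have := pr2 i0; have := pr2 i1; rewrite /complete /= e0 e1.
      by move=> h1 h0; rewrite h0 h1.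
    move=> F; move: (F i0) (F i1) (F i2); rewrite !unfold_in /Q /=.
    move=> e0 e1 /andP[n2a n2b]; rewrite e0 e1 /= andbT; split => //.
    move/eqP: e0 => e0; move/eqP: e1 => e1.
    apply/forallP => u; apply/forallP => v; apply/implyP; rewrite /complete.
    by case: (I3 u) => ->; case: (I3 v) => ->; rewrite ?eqxx //= => _; rewrite ?e0 ?e1 // eq_sym.
  rewrite -(bigA_distr_big_dep _ (fun _ j => x j)).
  rewrite !big_ord_recl big_ord0 /= mulr1.
  rewrite big_pred1_eq big_pred1_eq.
  congr (_ * (_ * _)).
  transitivity (\sum_(j | (j != a) && (j != b)) x j); first by apply: eq_bigl.
  rewrite /p1 (psum_bigD1 x a) [in RHS](bigD1 b) 1?eq_sym //=.
  ring.
under eq_bigr => a _ do rewrite sum_skip.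
rewrite (eq_bigr (fun a => (p1 * p1) * x a + (- 2%:R * p1) * x a ^+ 2 + 2%:R * x a ^+ 3
          - @psum N 2 x * x a)); last first.
  move=> a _; rewrite (eq_bigr (fun b => (x a * p1 - x a * x a) * x b + (- x a) * x b ^+ 2
          + 0 * x b ^+ 3)); last by move=> b _; ring.
  rewrite sum_cub; rewrite -/p1; ring.
rewrite sumrB sum_cub -mulr_sumr -/p1.
have -> : \sum_(i < N) x i = p1 by rewrite /p1 /psum; apply: eq_bigr => i _; rewrite expr1.
ring.
Qed.


Lemma prod_ind K (F : 'I_K -> rat) (j0 : 'I_K) (e : nat) :
  \prod_(i < K) F i ^+ ((i == j0) * e)%N = F j0 ^+ e.
Proof.
rewrite (bigD1 j0) //= eqxx mul1n big1 ?mulr1 //.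
by move=> i ni; rewrite (negbTE ni) mul0n expr0.
Qed.

Lemma sumn_ind K (G : 'I_K -> nat) (j0 : 'I_K) (e : nat) :
  (\sum_(i < K) G i * ((i == j0) * e) = G j0 * e)%N.
Proof.
rewrite (bigD1 j0) //= eqxx mul1n big1 ?addn0 //.
by move=> i ni; rewrite (negbTE ni) mul0n muln0.
Qed.

Definition mj k (j : 'I_k.+1) : mpart k.+1 :=
  [ffun i : 'I_k.+1 => inord ((i == j) * 1 + (i == ord0) * (k - j))%N].

Lemma mjE k (j : 'I_k.+1) i : nat_of_ord (mj j i) = ((i == j) * 1 + (i == ord0) * (k - j))%N.
Proof.
rewrite ffunE inordK // ltnS.
have := ltn_ord j; rewrite ltnS => lj.
case: (i == j); case: (i == ord0) => /=; lia.
Qed.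

Lemma pmp_mj k N (j : 'I_k.+1) x :
  @pmp k.+1 N (mj j) x = @psum N 1 x ^+ (k - j) * @psum N j.+1 x.
Proof.
rewrite /pmp; under eq_bigr => i _ do rewrite mjE exprD.
by rewrite big_split /= !prod_ind expr1 mulrC.
Qed.

Lemma partn_mj k (j : 'I_k.+1) : is_partn (mj j).
Proof.
rewrite /is_partn; under eq_bigr => i _ do rewrite mjE mulnDr.
rewrite big_split /= !sumn_ind /= muln1 mul1n.
have := ltn_ord j; rewrite ltnS => lj; apply/eqP; lia.
Qed.

Lemma lenp_mj k (j : 'I_k.+1) : (k.+1 - lenp (mj j))%N = j.
Proof.
rewrite /lenp; under eq_bigr => i _ do rewrite mjE.
rewrite big_split /=.
have E (e : nat) (j0 : 'I_k.+1) : (\sum_(i < k.+1) (i == j0) * e = e)%N.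
  rewrite (eq_bigr (fun i : 'I_k.+1 => 1 * ((i == j0) * e)))%N; last by move=> i _; rewrite mul1n.
  by rewrite (sumn_ind (fun _ => 1%N)) mul1n.
rewrite !E; have := ltn_ord j; rewrite ltnS => lj; lia.
Qed.

Definition Lstar k : seq (rat * mpart k.+1) :=
  [seq ((-1) ^+ j * ('C(k, j))%:R, mj j) | j : 'I_k.+1 <- index_enum 'I_k.+1].

Lemma Y_star k N (hk : (k.+1 <= N)%N) x :
  @Ygr k.+1 N (@star k.+1) x =
  \sum_(j < k.+1) (if odd j then 0 else ('C(k, j))%:R) *
     (@psum N 1 x ^+ (k - j) * @psum N j.+1 x).
Proof.
have PL : forall p, p \in Lstar k -> is_partn p.2.
  by move=> p /mapP[j _ ->]; apply: partn_mj.
rewrite (@Ygr_list k.+1 N hk (Lstar k)) //; last first.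
  by move=> y; rewrite X_star2 /Lstar big_map; apply: eq_bigr => j _; rewrite pmp_mj.
rewrite /Lstar big_map; apply: eq_bigr => j _ /=.
rewrite lenp_mj pmp_mj -signr_odd; case: (odd j) => /=; rewrite ?expr0 ?expr1.
  by rewrite subrr !mul0r.
by field.
Qed.

Definition m111 : mpart 3 := [ffun i : 'I_3 => inord ((i == i0) * 3)%N].
Definition m21 : mpart 3 := [ffun i : 'I_3 => inord ((i == i0) + (i == i1))%N].
Definition m3 : mpart 3 := [ffun i : 'I_3 => inord (i == i2)%N].

Lemma Y_C3 N (hk : (3 <= N)%N) x :
  @Ygr 3 N (@complete 3) x = @psum N 1 x ^+ 3 + 2%:R * @psum N 3 x.
Proof.
pose L : seq (rat * mpart 3) := [:: (1, m111); (- 3%:R, m21); (2%:R, m3)].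
have PL : forall p, p \in L -> is_partn p.2.
  by move=> p; rewrite !inE => /or3P[] /eqP -> /=; rewrite /is_partn !big_ord_recl big_ord0 !ffunE !inordK.
have P111 : forall y, @pmp 3 N m111 y = @psum N 1 y ^+ 3.
  by move=> y; rewrite /pmp !big_ord_recl big_ord0 !ffunE !inordK //= !expr0 !mulr1.
have P21 : forall y, @pmp 3 N m21 y = @psum N 1 y * @psum N 2 y.
  by move=> y; rewrite /pmp !big_ord_recl big_ord0 !ffunE !inordK //= !expr0 !mulr1 !expr1.
have P3 : forall y, @pmp 3 N m3 y = @psum N 3 y.
  by move=> y; rewrite /pmp !big_ord_recl big_ord0 !ffunE !inordK //= !expr0 !mulr1 !mul1r expr1.
rewrite (@Ygr_list 3 N hk L) //; last first.
  move=> y; rewrite X_C3 /L !big_cons big_nil P111 P21 P3 /=; ring.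
rewrite /L !big_cons big_nil P111 P21 P3.
have -> : lenp m111 = 3%N by rewrite /lenp !big_ord_recl big_ord0 !ffunE !inordK.
have -> : lenp m21 = 2%N by rewrite /lenp !big_ord_recl big_ord0 !ffunE !inordK.
have -> : lenp m3 = 1%N by rewrite /lenp !big_ord_recl big_ord0 !ffunE !inordK.
rewrite /= !expr0 expr1 expr2; by field.
Qed.


Definition vec q := {ffun 'I_q.+1 -> nat}.
Definition pm q (u : vec q) : fn q.+1 :=
  fun x => \prod_(i < q.+1) @psum q.+1 i.+1 x ^+ u i.
Definition len q (u : vec q) := (\sum_(i < q.+1) u i)%N.
Definition deg q (u : vec q) := (\sum_(i < q.+1) i.+1 * u i)%N.
Definition oddv q (u : vec q) := [forall i : 'I_q.+1, odd i ==> (u i == 0%N)].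
Definition vadd q (u v : vec q) : vec q := [ffun i => (u i + v i)%N].
Definition vzero q : vec q := [ffun => 0%N].
Definition vscale q (e : nat) (u : vec q) : vec q := [ffun i => (e * u i)%N].

Lemma pm_add q (u v : vec q) x : pm (vadd u v) x = pm u x * pm v x.
Proof. by rewrite /pm -big_split; apply: eq_bigr => i _; rewrite ffunE exprD. Qed.
Lemma deg_add q (u v : vec q) : deg (vadd u v) = (deg u + deg v)%N.
Proof. by rewrite /deg -big_split; apply: eq_bigr => i _; rewrite ffunE mulnDr. Qed.
Lemma len_add q (u v : vec q) : len (vadd u v) = (len u + len v)%N.
Proof. by rewrite /len -big_split; apply: eq_bigr => i _; rewrite ffunE. Qed.
Lemma oddv_add q (u v : vec q) : oddv u -> oddv v -> oddv (vadd u v).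
Proof.
move=> /forallP U /forallP V; apply/forallP => i; apply/implyP => oi.
by rewrite ffunE (eqP (implyP (U i) oi)) (eqP (implyP (V i) oi)).
Qed.
Lemma pm_zero q x : pm (vzero q) x = 1.
Proof. by rewrite /pm big1 // => i _; rewrite ffunE expr0. Qed.

Definition Tri q (L : vec q) (C : rat) (f : fn q.+1) :=
  oddv L /\ exists s : seq (rat * vec q),
  (forall p, p \in s -> [/\ deg p.2 = deg L, oddv p.2 & (len L < len p.2)%N]) /\
  (forall x, f x = C * pm L x + \sum_(p <- s) p.1 * pm p.2 x).

Lemma Tri_ext q L C (f g : fn q.+1) : (forall x, f x = g x) -> Tri L C f -> Tri L C g.
Proof. by move=> E [oL [s [Hs Hf]]]; split=> //; exists s; split=> // x; rewrite -E. Qed.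

Lemma Tri_one q : Tri (vzero q) 1 (fun _ => 1).
Proof.
split; first by apply/forallP => i; rewrite ffunE implybT.
by exists [::]; split=> // x; rewrite big_nil addr0 pm_zero mulr1.
Qed.

Lemma Tri_mul q L L' C C' (f g : fn q.+1) : Tri L C f -> Tri L' C' g ->
  Tri (vadd L L') (C * C') (fun x => f x * g x).
Proof.
move=> [oL [s [Hs Hf]]] [oL' [s' [Hs' Hg]]]; split; first exact: oddv_add.
exists ([seq (C * p.1, vadd L p.2) | p <- s'] ++ [seq (C' * p.1, vadd p.2 L') | p <- s]
        ++ [seq (p.1 * p'.1, vadd p.2 p'.2) | p <- s, p' <- s']); split.
  move=> p; rewrite !mem_cat => /or3P[].
  - case/mapP => p' /Hs' [d o l] -> /=.
    by split; rewrite ?deg_add ?len_add ?d ?ltn_add2l //; apply: oddv_add.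
  - case/mapP => p' /Hs [d o l] -> /=.
    by split; rewrite ?deg_add ?len_add ?d ?ltn_add2r //; apply: oddv_add.
  - case/allpairsP => -[p1 p2] [/Hs [d o l] /Hs' [d' o' l'] ->] /=.
    split; rewrite ?deg_add ?len_add ?d ?d' //; first by apply: oddv_add.
    by move: l l' => /= l l'; rewrite -addSn; apply: leq_add l (ltnW l').
move=> x; rewrite Hf Hg !big_cat !big_map big_allpairs_dep /= pm_add.
set SA := \sum_(p <- s) _; set SB := \sum_(p <- s') _.
have E1 : \sum_(j <- s') C * j.1 * pm (vadd L j.2) x = C * pm L x * SB.
  by rewrite /SB mulr_sumr; apply: eq_bigr => p _; rewrite pm_add; ring.
have E2 : \sum_(j <- s) C' * j.1 * pm (vadd j.2 L') x = C' * pm L' x * SA.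
  by rewrite /SA mulr_sumr; apply: eq_bigr => p _; rewrite pm_add; ring.
have E3 : \sum_(i <- s) \sum_(i2 <- s') i.1 * i2.1 * pm (vadd i.2 i2.2) x = SA * SB.
  rewrite /SA mulr_suml; apply: eq_bigr => p _; rewrite mulr_sumr.
  by apply: eq_bigr => p' _; rewrite pm_add; ring.
rewrite E1 E2 E3; ring.
Qed.

Lemma Tri_pow q L C (f : fn q.+1) e : Tri L C f ->
  Tri (vscale e L) (C ^+ e) (fun x => f x ^+ e).
Proof.
move=> T; elim: e => [|e IH].
  have -> : vscale 0 L = vzero q by apply/ffunP => i; rewrite !ffunE.
  by apply: Tri_ext (Tri_one q) => x; rewrite expr0.
have -> : vscale e.+1 L = vadd (vscale e L) L.
  by apply/ffunP => i; rewrite !ffunE mulSn addnC.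
by rewrite exprSr; apply: Tri_ext (Tri_mul IH T) => x; rewrite exprSr.
Qed.

Lemma Tri_prod q (r : seq 'I_q.+1) (Lf : 'I_q.+1 -> vec q) (Cf : 'I_q.+1 -> rat)
    (F : 'I_q.+1 -> fn q.+1) :
  (forall i, i \in r -> Tri (Lf i) (Cf i) (F i)) ->
  Tri [ffun j => \sum_(i <- r) Lf i j]%N (\prod_(i <- r) Cf i)
      (fun x => \prod_(i <- r) F i x).
Proof.
elim: r => [|i r IH] H.
  have -> : [ffun j => (\sum_(i <- [::]) Lf i j)%N] = vzero q.
    by apply/ffunP => j; rewrite !ffunE big_nil.
  by rewrite big_nil; apply: Tri_ext (Tri_one q) => x; rewrite big_nil.
have -> : [ffun j => (\sum_(i0 <- i :: r) Lf i0 j)%N] =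
          vadd (Lf i) [ffun j => (\sum_(i <- r) Lf i j)%N].
  by apply/ffunP => j; rewrite !ffunE big_cons.
rewrite big_cons; apply: Tri_ext (Tri_mul (H i (mem_head _ _)) (IH _)).
  by move=> x; rewrite big_cons.
by move=> j jr; apply: H; rewrite inE jr orbT.
Qed.


Lemma prod_indn K (F : 'I_K -> rat) (j : nat) (hj : (j < K)%N) (e : nat) :
  \prod_(i < K) F i ^+ ((i == j :> nat) * e)%N = F (Ordinal hj) ^+ e.
Proof. by rewrite -(prod_ind F (Ordinal hj) e). Qed.

Lemma sumn_indn K (G : 'I_K -> nat) (j : nat) (hj : (j < K)%N) (e : nat) :
  (\sum_(i < K) G i * ((i == j :> nat) * e) = G (Ordinal hj) * e)%N.
Proof. by rewrite -(sumn_ind G (Ordinal hj) e). Qed.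

Lemma sumn_indn1 K (j : nat) (hj : (j < K)%N) (e : nat) :
  (\sum_(i < K) ((i == j :> nat) * e) = e)%N.
Proof.
rewrite (eq_bigr (fun i : 'I_K => 1 * ((i == j :> nat) * e)))%N; last by move=> i _; rewrite mul1n.
by rewrite (sumn_indn (fun _ => 1%N) hj) mul1n.
Qed.

Definition ev q (i : nat) : vec q := [ffun j : 'I_q.+1 => ((j == i :> nat) * 1)%N].
Definition U q k (j : nat) : vec q :=
  [ffun i : 'I_q.+1 => ((i == j :> nat) * 1 + (i == 0%N :> nat) * (k - j))%N].

Lemma pm_U q k j (hj : (j < q.+1)%N) x :
  pm (U q k j) x = @psum q.+1 1 x ^+ (k - j) * @psum q.+1 j.+1 x.
Proof.
rewrite /pm; under eq_bigr => i _ do rewrite ffunE exprD.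
rewrite big_split /= (prod_indn _ hj) (prod_indn (fun i : 'I_q.+1 => @psum q.+1 i.+1 x) (ltn0Sn q)).
by rewrite expr1 mulrC.
Qed.

Lemma deg_U q k j (hj : (j < q.+1)%N) (hjk : (j <= k)%N) : deg (U q k j) = k.+1.
Proof.
rewrite /deg; under eq_bigr => i _ do rewrite ffunE mulnDr.
rewrite big_split /= (sumn_indn (fun i : 'I_q.+1 => i.+1) hj) (sumn_indn (fun i : 'I_q.+1 => i.+1) (ltn0Sn q)) /=.
lia.
Qed.

Lemma len_U q k j (hj : (j < q.+1)%N) : len (U q k j) = (k - j).+1.
Proof.
rewrite /len; under eq_bigr => i _ do rewrite ffunE.
by rewrite big_split /= (sumn_indn1 hj) (sumn_indn1 (ltn0Sn q)) add1n.
Qed.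

Lemma oddv_U q k j : ~~ odd j -> oddv (U q k j).
Proof.
move=> ej; apply/forallP => i; apply/implyP => oi; rewrite ffunE.
have -> : (i == j :> nat) = false by apply/negP => /eqP e; move: ej; rewrite -e oi.
have -> : (i == 0%N :> nat) = false by apply/negP => /eqP e; move: oi; rewrite e.
done.
Qed.

Lemma pm_ev q i (hi : (i < q.+1)%N) x : pm (ev q i) x = @psum q.+1 i.+1 x.
Proof. by rewrite /pm; under eq_bigr => j _ do rewrite ffunE; rewrite (prod_indn _ hi) expr1. Qed.

Lemma deg_ev q i (hi : (i < q.+1)%N) : deg (ev q i) = i.+1.
Proof.
rewrite /deg; under eq_bigr => j _ do rewrite ffunE.
by rewrite (sumn_indn (fun j : 'I_q.+1 => j.+1) hi) muln1.
Qed.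

Lemma len_ev q i (hi : (i < q.+1)%N) : len (ev q i) = 1%N.
Proof. by rewrite /len; under eq_bigr => j _ do rewrite ffunE; rewrite (sumn_indn1 hi). Qed.

Lemma oddv_ev q i : ~~ odd i -> oddv (ev q i).
Proof.
move=> ei; apply/forallP => j; apply/implyP => oj; rewrite ffunE.
have -> : (j == i :> nat) = false by apply/negP => /eqP e; move: ei; rewrite -e oj.
done.
Qed.

Lemma Tri_star q k (hk : (k < q.+1)%N) (ek : ~~ odd k) :
  Tri (ev q k) 1 (@Ygr k.+1 q.+1 (@star k.+1)).
Proof.
split; first exact: oddv_ev.
exists [seq (('C(k, j))%:R, U q k j) | j <- iota 0 k & ~~ odd j]; split.
  move=> p /mapP[j]; rewrite mem_filter mem_iota add0n => /andP[ej /andP[_ ljk]] -> /=.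
  have hj : (j < q.+1)%N by apply: ltn_trans hk.
  split; first by rewrite deg_U ?deg_ev // ltnW.
    exact: oddv_U.
  by rewrite len_ev // len_U // ltnS subn_gt0.
move=> x; rewrite Y_star // big_ord_recr /= (negbTE ek) binn subnn expr0 mul1r.
rewrite pm_ev // addrC; congr (_ + _).
rewrite big_map big_filter.
have -> : iota 0 k = index_iota 0 k by rewrite /index_iota subn0.
rewrite big_mkord [RHS]big_mkcond /=; apply: eq_bigr => j _.
have hj : (j < q.+1)%N by apply: ltn_trans hk.
by case: (odd j); rewrite /= ?mul0r // pm_U.
Qed.

Lemma Tri_C3 q (hq : (2 < q.+1)%N) : Tri (ev q 2) 2%:R (@Ygr 3 q.+1 (@complete 3)).
Proof.
split; first exact: oddv_ev.
exists [:: (1, U q 2 0)]; split.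
  move=> p; rewrite inE => /eqP -> /=.
  by rewrite deg_U // deg_ev // len_ev // len_U //; split=> //; apply: oddv_U.
move=> x; rewrite Y_C3 // big_cons big_nil pm_ev // pm_U //= subn0.
by rewrite expr2 exprS expr2; ring.
Qed.

Definition CB1 (i : nat) : rat := if i == 2%N then 2%:R else 1.

Lemma Tri_B1 q (i : 'I_q.+1) : ~~ odd i -> Tri (ev q i) (CB1 i) (@Ygr i.+1 q.+1 (@B1 i.+1)).
Proof.
case: i => [i hi] /= ei.
case: (eqVneq i 2%N) => [e|ne].
  subst i; rewrite /B1 /CB1 /=; exact: Tri_C3.
rewrite /B1 /CB1 eqSS (negbTE ne); exact: Tri_star.
Qed.

Lemma Tri_B2 q (i : 'I_q.+1) : ~~ odd i -> Tri (ev q i) 1 (@Ygr i.+1 q.+1 (@B2 i.+1)).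
Proof. by case: i => [i hi] /= ei; rewrite /B2; apply: Tri_star. Qed.


Definition vecm q (m : mpart q.+1) : vec q := [ffun i => nat_of_ord (m i)].

Lemma Tri_Yprod q (B : forall k, rel 'I_k) (CB : nat -> rat)
  (HB : forall i : 'I_q.+1, ~~ odd i -> Tri (ev q i) (CB i) (@Ygr i.+1 q.+1 (B i.+1)))
  (m : mpart q.+1) : oddp m ->
  Tri (vecm m) (\prod_(i < q.+1) CB i ^+ m i) (@Yprod q.+1 B m).
Proof.
move=> om.
have T := @Tri_prod q (index_enum _) (fun i => vscale (m i) (ev q i)) (fun i => CB i ^+ m i)
   (fun i x => @Ygr i.+1 q.+1 (B i.+1) x ^+ m i).
have -> : vecm m = [ffun j => (\sum_(i <- index_enum _) vscale (m i) (ev q i) j)%N].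
  apply/ffunP => j; rewrite !ffunE.
  rewrite (eq_bigr (fun i : 'I_q.+1 => m i * ((i == j :> nat) * 1))%N).
    by rewrite (sumn_ind (fun i => nat_of_ord (m i)) j 1) muln1.
  by move=> i _; rewrite !ffunE eq_sym.
apply: Tri_ext (T _) => //.
move=> i _; case: (boolP (odd i)) => oi.
  have -> : nat_of_ord (m i) = 0%N by apply/eqP; move/forallP: om => /(_ i); rewrite oi.
  have -> : vscale 0 (ev q i) = vzero q by apply/ffunP => j; rewrite !ffunE.
  by apply: Tri_ext (Tri_one q) => x; rewrite expr0.
by apply: Tri_pow; apply: HB.
Qed.

Definition toM q (u : vec q) : mpart q.+1 := [ffun i => inord (u i)].

Lemma toME q (u : vec q) : deg u = q.+1 -> forall i, nat_of_ord (toM u i) = u i.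
Proof.
move=> d i; rewrite ffunE inordK // ltnS.
have h1 : (u i <= i.+1 * u i)%N by rewrite leq_pmull.
move: (term_le u i); rewrite -/(deg u) d => h2.
exact: leq_trans h1 h2.
Qed.

Lemma pm_toM q (u : vec q) x : deg u = q.+1 -> pm u x = @pmp q.+1 q.+1 (toM u) x.
Proof. by move=> d; rewrite /pm /pmp; apply: eq_bigr => i _; rewrite toME. Qed.

Lemma partn_toM q (u : vec q) : deg u = q.+1 -> is_partn (toM u).
Proof.
move=> d; rewrite /is_partn; apply/eqP; rewrite -[RHS]d /deg; apply: eq_bigr => i _.
by rewrite toME.
Qed.

Lemma oddp_toM q (u : vec q) : deg u = q.+1 -> oddv u -> oddp (toM u).
Proof.
move=> d /forallP o; apply/forallP => i; apply/implyP => oi.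
by rewrite toME //; move/implyP: (o i); apply.
Qed.

Lemma lenp_toM q (u : vec q) : deg u = q.+1 -> lenp (toM u) = len u.
Proof. by move=> d; rewrite /lenp /len; apply: eq_bigr => i _; rewrite toME. Qed.

Lemma toM_vecm q (m : mpart q.+1) : toM (vecm m) = m.
Proof. by apply/ffunP => i; apply/val_inj; rewrite ffunE /= ffunE inord_val. Qed.

Lemma deg_vecm q (m : mpart q.+1) : is_partn m -> deg (vecm m) = q.+1.
Proof. by move=> /eqP <-; rewrite /deg; apply: eq_bigr => i _; rewrite ffunE. Qed.

Lemma len_vecm q (m : mpart q.+1) : len (vecm m) = lenp m.
Proof. by rewrite /len /lenp; apply: eq_bigr => i _; rewrite ffunE. Qed.

Lemma pm_vecm q (m : mpart q.+1) x : pm (vecm m) x = @pmp q.+1 q.+1 m x.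
Proof. by rewrite /pm /pmp; apply: eq_bigr => i _; rewrite ffunE. Qed.

Lemma lenp_le q (m : mpart q.+1) : is_partn m -> (lenp m <= q.+1)%N.
Proof.
move=> /eqP E; rewrite -[X in (_ <= X)%N]E /lenp; apply: leq_sum => i _.
by rewrite leq_pmull.
Qed.

Lemma len_le q (u : vec q) : deg u = q.+1 -> (len u <= q.+1)%N.
Proof. by move=> d; rewrite -lenp_toM // lenp_le // partn_toM. Qed.

Definition PO q (m : mpart q.+1) := is_partn m && oddp m.

Definition Sp q (F : mpart q.+1 -> fn q.+1) (f : fn q.+1) :=
  exists a : {ffun mpart q.+1 -> rat},
    forall x, f x = \sum_(m | is_partn m && oddp m) a m * F m x.

Lemma Sp_ext q F (f g : fn q.+1) : (forall x, f x = g x) -> Sp F f -> Sp F g.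
Proof. by move=> E [a Ha]; exists a => x; rewrite -E. Qed.

Lemma Sp_gen q F (m : mpart q.+1) : PO m -> Sp F (F m).
Proof.
move=> Pm; exists [ffun m' => (m' == m)%:R] => x.
rewrite (bigD1 m) //= ffunE eqxx mul1r big1 ?addr0 //.
by move=> m' /andP[_ nm]; rewrite ffunE (negbTE nm) mul0r.
Qed.

Lemma Sp_zero q F : Sp F (fun _ : 'I_q.+1 -> rat => 0).
Proof. by exists [ffun => 0] => x; rewrite big1 // => m _; rewrite ffunE mul0r. Qed.

Lemma Sp_lin q F (f g : fn q.+1) (c d : rat) : Sp F f -> Sp F g ->
  Sp F (fun x => c * f x + d * g x).
Proof.
move=> [a Ha] [b Hb]; exists [ffun m => c * a m + d * b m] => x.
rewrite Ha Hb !mulr_sumr -big_split /=; apply: eq_bigr => m _.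
by rewrite ffunE; ring.
Qed.

Lemma Sp_seq q F (T : eqType) (r : seq T) (G : T -> fn q.+1) :
  (forall t, t \in r -> Sp F (G t)) -> Sp F (fun x => \sum_(t <- r) G t x).
Proof.
elim: r => [|t r IH] H.
  by apply: Sp_ext (Sp_zero F) => x; rewrite big_nil.
have H1 := H t (mem_head _ _).
have H2 : Sp F (fun x => \sum_(t <- r) G t x).
  by apply: IH => t' tr; apply: H; rewrite inE tr orbT.
by apply: Sp_ext (Sp_lin 1 1 H1 H2) => x; rewrite big_cons !mul1r.
Qed.


Lemma Sp_scale q F (f : fn q.+1) (c : rat) : Sp F f -> Sp F (fun x => c * f x).
Proof. by move=> H; apply: Sp_ext (Sp_lin c 0 H H) => x; rewrite mul0r addr0. Qed.

Lemma Sp_bigP q F (G : mpart q.+1 -> fn q.+1) :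
  (forall m, PO m -> Sp F (G m)) ->
  Sp F (fun x => \sum_(m | is_partn m && oddp m) G m x).
Proof.
move=> H; apply: Sp_ext (Sp_seq (r := [seq m <- index_enum _ | PO m]) (G := G) _).
  by move=> x; rewrite big_filter.
by move=> m; rewrite mem_filter => /andP[Pm _]; apply: H.
Qed.

Lemma pm_Sp q (u : vec q) : deg u = q.+1 -> oddv u ->
  Sp (fun m => @pmp q.+1 q.+1 m) (pm u).
Proof.
move=> d o; apply: Sp_ext (Sp_gen (fun m => @pmp q.+1 q.+1 m) (m := toM u) _).
  by move=> x; rewrite pm_toM.
by rewrite /PO partn_toM // oddp_toM.
Qed.

Lemma basis q (B : forall k, rel 'I_k) (CB : nat -> rat)
  (HB : forall i : 'I_q.+1, ~~ odd i -> Tri (ev q i) (CB i) (@Ygr i.+1 q.+1 (B i.+1)))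
  (CBnz : forall i, CB i != 0) : is_basis_Gamma (@Yprod q.+1 B).
Proof.
pose CY (m : mpart q.+1) := \prod_(i < q.+1) CB i ^+ m i.
have CYnz m : CY m != 0.
  by rewrite prodf_seq_neq0; apply/allP => i _; rewrite expf_neq0.
have TY m : PO m -> Tri (vecm m) (CY m) (@Yprod q.+1 B m).
  by case/andP => _ om; apply: Tri_Yprod.
have lenS (m : mpart q.+1) (p : rat * vec q) : PO m -> deg p.2 = deg (vecm m) -> oddv p.2 ->
    (len (vecm m) < len p.2)%N -> PO (toM p.2) /\ (lenp m < lenp (toM p.2))%N.
  case/andP=> Pm om d o l; rewrite deg_vecm // in d.
  by rewrite /PO partn_toM // oddp_toM // lenp_toM // -len_vecm.
split.
- move=> m Pm om; have [oL [s [Hs Hf]]] := TY m (introT andP (conj Pm om)).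
  change (Sp (fun m => @pmp q.+1 q.+1 m) (@Yprod q.+1 B m)).
  apply: Sp_ext (fun x => esym (Hf x)) _.
  have H1 : Sp (fun m => @pmp q.+1 q.+1 m) (pm (vecm m)).
    by apply: pm_Sp; rewrite ?deg_vecm //; apply/forallP => i; rewrite ffunE;
       apply/implyP => oi; move/forallP: om => /(_ i); rewrite oi.
  have H2 : Sp (fun m => @pmp q.+1 q.+1 m) (fun x => \sum_(p <- s) p.1 * pm p.2 x).
    apply: Sp_seq => p ps; have [d o _] := Hs p ps.
    by apply: Sp_scale; apply: pm_Sp => //; rewrite d deg_vecm.
  by apply: Sp_ext (Sp_lin (CY m) 1 H1 H2) => x; rewrite mul1r.
- move=> a Ha.
  pose PS (m : mpart q.+1) (s : seq (rat * vec q)) := PO m ->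
      (forall p, p \in s -> [/\ deg p.2 = deg (vecm m), oddv p.2 & (len (vecm m) < len p.2)%N]) /\
      (forall x, @Yprod q.+1 B m x = CY m * pm (vecm m) x + \sum_(p <- s) p.1 * pm p.2 x).
  have [S HS] : exists S : mpart q.+1 -> seq (rat * vec q), forall m, PS m (S m).
    apply: (@fin_all_exists _ (fun _ => seq (rat * vec q)) PS) => m.
    case: (boolP (PO m)) => Pm; last by exists [::] => P; rewrite P in Pm.
    by have [_ [s Hs]] := TY m Pm; exists s => _.
  pose b : {ffun mpart q.+1 -> rat} := [ffun m' => \sum_(m | PO m) a m *
       ((m == m')%:R * CY m + \sum_(p <- S m) p.1 * (toM p.2 == m')%:R)].
  have Hb : forall m', is_partn m' -> b m' = 0.
    apply: (@pm_indep q.+1 q.+1 _ (@is_partn q.+1) (fun m i => nat_of_ord (m i)) b).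
    + by move=> m1 m2 _ _ E; apply/ffunP => i; apply/val_inj; apply: E.
    + by move=> m /eqP ->.
    move=> x; rewrite -[RHS](Ha x).
    rewrite (eq_bigr (fun m' => b m' * @pmp q.+1 q.+1 m' x)) //.
    rewrite /b; under eq_bigr => m' _ do rewrite ffunE mulr_suml.
    rewrite exchange_big /=; apply: eq_bigr => m Pm.
    have [Hs Hf] := HS m Pm; rewrite Hf.
    under eq_bigr => m' _ do rewrite mulrDr mulrDl mulr_sumr mulr_suml.
    rewrite big_split /= exchange_big /= pm_vecm.
    have Pm' : is_partn m by case/andP: Pm.
    rewrite (eq_bigr (fun m' => (m == m')%:R * (a m * CY m * @pmp q.+1 q.+1 m' x)));
      last by move=> m' _; ring.
    rewrite sum_pick // mulrDr mulr_sumr; congr (_ + _); first by ring.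
    apply: eq_big_seq => p ps; have [d o l] := Hs p ps.
    have [Pp _] := lenS m p Pm d o l; case/andP: Pp => Pp _.
    rewrite (eq_bigr (fun m' => (toM p.2 == m')%:R * (a m * p.1 * @pmp q.+1 q.+1 m' x)));
      last by move=> m' _; ring.
    by rewrite sum_pick // -pm_toM; [ring | rewrite d deg_vecm].
  suff H : forall l m0, PO m0 -> (lenp m0 < l)%N -> a m0 = 0.
    by move=> m0 Pm om; apply: (H (lenp m0).+1) => //; rewrite /PO Pm om.
  elim=> // l IHl m0 P0 lt.
  have := Hb m0 (proj1 (andP P0)); rewrite ffunE (bigD1 m0) //= eqxx mul1r.
  have Z : forall m, PO m -> a m != 0 -> \sum_(p <- S m) p.1 * (toM p.2 == m0)%:R = 0.
    move=> m Pm nz; rewrite big_seq big1 // => p ps.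
    have [Hs _] := HS m Pm; have [d o l1] := Hs p ps.
    have [_ lt1] := lenS m p Pm d o l1.
    have lm : (l <= lenp m)%N.
      by rewrite leqNgt; apply/negP => lml; rewrite (IHl m Pm lml) eqxx in nz.
    have -> : (toM p.2 == m0) = false.
      by apply/negP => /eqP e; move: lt1 lm lt; rewrite e; lia.
    by rewrite mulr0.
  rewrite [\sum_(m | PO m && (m != m0)) _]big1; last first.
    move=> m /andP[Pm nm]; have [->|nz] := eqVneq (a m) 0; first by rewrite mul0r.
    by rewrite (negbTE nm) mul0r add0r Z // mulr0.
  have [->|nz] := eqVneq (a m0) 0; first by [].
  rewrite Z // addr0 addr0 => /eqP; rewrite mulf_eq0 (negbTE (CYnz m0)) orbF.
  by move/eqP.
- have key : forall d m, PO m -> (q.+1 - lenp m < d)%N -> Sp (@Yprod q.+1 B) (@pmp q.+1 q.+1 m).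
    elim=> // d IHd m Pm lt; have [oL [s [Hs Hf]]] := TY m Pm.
    apply: Sp_ext (Sp_lin (CY m)^-1 (- (CY m)^-1) (Sp_gen (@Yprod q.+1 B) Pm)
             (Sp_seq (r := s) (G := fun p x => p.1 * pm p.2 x) _)).
      move=> x; rewrite Hf pm_vecm; field; exact: CYnz.
    move=> p ps; have [d1 o l1] := Hs p ps; have [Pp lt1] := lenS m p Pm d1 o l1.
    apply: Sp_scale; apply: Sp_ext (IHd _ Pp _).
      by move=> x; rewrite pm_toM // d1 deg_vecm //; case/andP: Pm.
    have := lenp_le (proj1 (andP Pp)); move: lt1 lt; lia.
  move=> f [c Hc]; apply: Sp_ext (fun x => esym (Hc x)) _.
  apply: Sp_bigP => m Pm; apply: Sp_scale; apply: (key (q.+1 - lenp m).+1) => //.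
Qed.

Theorem mainTheorem6 (n : nat) (hn : (0 < n)%N) :
  @is_basis_Gamma n (@Yprod n B1) /\ @is_basis_Gamma n (@Yprod n B2).
Proof.
case: n hn => [//|q] _; split.
  apply: (@basis q (@B1) CB1) => [i ei|i]; first exact: Tri_B1.
  by rewrite /CB1; case: ifP; rewrite ?pnatr_eq0 ?oner_eq0.
apply: (@basis q (@B2) (fun _ => 1)) => [i ei|i]; first exact: Tri_B2.
exact: oner_neq0.
Qed.
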